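(* In the setting described in the context, the pair $B,B^*$ is a tridiagonal pair on $V$. The sequence $bq^{2i-d}$ ($0\le i\le d$) is a standard ordering of the eigenvalues of $B$ and the sequence $b^*q^{d-2i}$ ($0\le i\le d$) is a standard ordering of the eigenvalues of $B^*$.
   Context: $\mathbb K$ is an algebraically closed field, $q\in\mathbb K$ nonzero and not a root of unity, $V$ a nonzero finite-dimensional $\mathbb K$-vector space. A tridiagonal pair on $V$ is an ordered pair $A,A^*$ of linear maps $V\to V$ such that: (i) each of $A,A^*$ is diagonalizable; (ii) there is an ordering $V_0,\dots,V_d$ of the eigenspaces of $A$ with $A^*V_i\subseteq V_{i-1}+V_i+V_{i+1}$ ($V_{-1}=V_{d+1}=0$); (iii) there is an ordering $V^*_0,\dots,V^*_\delta$ of the eigenspaces of $A^*$ with $AV^*_i\subseteq V^*_{i-1}+V^*_i+V^*_{i+1}$ ($V^*_{-1}=V^*_{\delta+1}=0$); (iv) no subspace $W\ne0,V$ satisfies $AW\subseteq W$, $A^*W\subseteq W$. It is known $d=\delta$; orderings of eigenspaces as in (ii),(iii) are called standard, and an ordering of eigenvalues is standard if the corresponding eigenspace ordering is. Setting: $A,A^*$ is a tridiagonal pair on $V$; $V_0,\dots,V_d$ (resp. $V^*_0,\dots,V^*_d$) is a standard ordering of the eigenspaces of $A$ (resp. $A^*$); the eigenvalue of $A$ on $V_i$ is $aq^{2i-d}$ and that of $A^*$ on $V^*_i$ is $a^*q^{d-2i}$ for some nonzero $a,a^*\in\mathbb K$; $b,b^*\in\mathbb K$ are nonzero. For $0\le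 i\le d$ the subspaces $(V^*_0+\cdots+V^*_i)\cap(V_0+\cdots+V_{d-i})$ form a decomposition of $V$ (nonzero, direct sum equal to $V$), as do the subspaces $(V^*_{d-i}+\cdots+V^*_d)\cap(V_i+\cdots+V_d)$. $B:V\to V$ is the linear map acting as $bq^{2i-d}I$ on $(V^*_0+\cdots+V^*_i)\cap(V_0+\cdots+V_{d-i})$ for each $i$, and $B^*:V\to V$ is the linear map acting as $b^*q^{d-2i}I$ on $(V^*_{d-i}+\cdots+V^*_d)\cap(V_i+\cdots+V_d)$ for each $i$. *)

(* Defs.v *)
From HB Require Import structures.
From mathcomp Require Import all_boot all_order all_algebra.
Set Implicit Arguments. Unset Strict Implicit. Unset Printing Implicit Defensive.
Import GRing.Theory.
Local Open Scope ring_scope.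

Section TD.
Variables (K : fieldType) (V : vectType K).

Definition leigenspace (f : 'End(V)) (t : K) : {vspace V} :=
  lker (f - t *: \1%VF).
Definition leigenvalue (f : 'End(V)) (t : K) : bool := leigenspace f t != 0%VS.

Definition diagonalizable (f : 'End(V)) : Prop :=
  exists s : seq K, (\sum_(t <- s) leigenspace f t)%VS = fullv.

Definition eigsp (f : 'End(V)) (d : nat) (th : nat -> K) (i : nat) : {vspace V} :=
  if (i <= d)%N then leigenspace f (th i) else 0%VS.

Definition standard_ordering (f g : 'End(V)) (d : nat) (th : nat -> K) : Prop :=
  [/\ uniq [seq th i | i <- iota 0 d.+1],
      (forall i, (i <= d)%N -> leigenvalue f (th i)),
      (forall t, leigenvalue f t -> exists2 i, (i <= d)%N & t = th i) &
      (forall i, (i <= d)%N ->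
         (g @: eigsp f d th i <=
            eigsp f d th i.-1 + eigsp f d th i + eigsp f d th i.+1)%VS)].
(* note: for i = 0, V_{i-1} = V_{-1} = 0; using eigsp f d th 0.-1 = V_0
   there is harmless since V_0 is already a summand. *)

Definition tridiagonal_pair (A As : 'End(V)) : Prop :=
  [/\ (fullv : {vspace V}) != 0%VS,
      diagonalizable A /\ diagonalizable As,
      (exists d th, standard_ordering A As d th),
      (exists d th, standard_ordering As A d th) &
      forall W : {vspace V}, (A @: W <= W)%VS -> (As @: W <= W)%VS ->
        W = 0%VS \/ W = fullv].

End TD.

Definition qexp (K : fieldType) (q : K) (i d : nat) : K :=
  q ^ ((2 * i)%:Z - d%:Z).

Definition qexp_rev (K : fieldType) (q : K) (i d : nat) : K :=
  q ^ (d%:Z - (2 * i)%:Z).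

(* Main.v *)
Require Import Defs.
From HB Require Import structures.
From mathcomp Require Import all_boot all_order all_algebra.
From mathcomp Require Import zify ring.
Require Import Defs.
Set Implicit Arguments. Unset Strict Implicit. Unset Printing Implicit Defensive.
Import GRing.Theory.
Local Open Scope ring_scope.

Section Gen.
Variables (K : fieldType) (V : vectType K).

Lemma direct_split (I : finType) (Us : I -> {vspace V}) (P : pred I) :
  directv (\sum_i Us i) ->
  ((\sum_(i | P i) Us i) :&: (\sum_(i | ~~ P i) Us i) = 0)%VS.
Proof.
move/directv_sum_independent => Hind.
apply/eqP; rewrite -subv0; apply/subvP => v /memv_capP[/memv_sumP[us Hus ->]].
move=> /memv_sumP[vs Hvs Heq].
pose ws i := if P i then us i else - vs i.
have Hw : forall i, true -> ws i \in Us i.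
  by move=> i _; rewrite /ws; case: ifP => Pi; [apply: Hus | rewrite memvN; apply: Hvs; rewrite Pi].
have Hs : \sum_(i | true) ws i = 0.
  rewrite (bigID P) /=.
  have -> : \sum_(i | P i) ws i = \sum_(i | P i) us i.
    by apply: eq_bigr => i Pi; rewrite /ws Pi.
  have -> : \sum_(i | ~~ P i) ws i = \sum_(i | ~~ P i) - vs i.
    by apply: eq_bigr => i Pi; rewrite /ws (negbTE Pi).
  by rewrite sumrN Heq subrr.
have := Hind ws Hw Hs.
move=> H0; rewrite memv0; apply/eqP; apply: big1 => i Pi.
by have := H0 i isT; rewrite /ws Pi.
Qed.

Lemma eig_indep_seq (f : 'End(V)) (I : eqType) (th : I -> K) (r : seq I) :
  uniq r -> {in r &, injective th} ->
  forall us : I -> V, (forall i, i \in r -> us i \in lker (f - th i *: \1)%VF) ->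
  \sum_(i <- r) us i = 0 -> forall i, i \in r -> us i = 0.
Proof.
elim: r => [|k r IH] //= /andP[kr ur] thinj us Hus Hsum.
have Hf : forall i, i \in k :: r -> f (us i) = th i *: us i.
  move=> i /Hus; rewrite memv_ker !lfun_simp /= => /eqP /eqP; rewrite subr_eq0 => /eqP.
  by [].
rewrite big_cons in Hsum.
pose us' i := (th i - th k) *: us i.
have Hus' : forall i, i \in r -> us' i \in lker (f - th i *: \1)%VF.
  by move=> i ir; apply: memvZ; apply: Hus; rewrite inE ir orbT.
have Hs' : \sum_(i <- r) us' i = 0.
  have : f (us k + \sum_(j <- r) us j) - th k *: (us k + \sum_(j <- r) us j) = 0.
    by rewrite Hsum linear0 scaler0 subrr.
  rewrite linearD /= linear_sum /= (Hf k (mem_head _ _)) scalerDr scaler_sumr.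
  rewrite opprD addrACA subrr add0r -sumrB => H; apply: (etrans _ H).
  rewrite big_seq [RHS]big_seq; apply: eq_bigr => j jr.
  by rewrite /us' Hf ?inE ?jr ?orbT // scalerBl.
have Hr0 := IH ur (sub_in2 (fun x xr => mem_behead xr) thinj) us' Hus' Hs'.
have Hr : forall i, i \in r -> us i = 0.
  move=> i ir; have := Hr0 i ir; rewrite /us' => /eqP; rewrite scaler_eq0 subr_eq0.
  case/orP => [/eqP E|/eqP //].
  have := thinj i k; rewrite inE ir orbT mem_head E => /(_ isT isT erefl) Eik.
  by move: kr; rewrite -Eik ir.
have Hk : us k = 0.
  by move: Hsum; rewrite big_seq big1 ?addr0 // => i ir; apply: Hr.
by move=> i; rewrite inE => /orP[/eqP ->|]; [exact: Hk | exact: Hr].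
Qed.

Lemma eig_direct (f : 'End(V)) (I : finType) (th : I -> K) :
  injective th -> directv (\sum_(i : I) lker (f - th i *: \1)%VF).
Proof.
move=> thinj; apply/directv_sum_independent => us Hus Hsum i _.
apply: (@eig_indep_seq f I th (index_enum I)) => //.
- exact: index_enum_uniq.
- by move=> x y _ _; apply: thinj.
- by move=> j _; apply: Hus.
Qed.

End Gen.


Section Proj.
Variables (K : fieldType) (V : vectType K).
Variables (d : nat) (U : nat -> {vspace V}).
Hypothesis Hdir : directv (\sum_(i < d.+1) U i).
Hypothesis Hfull : (\sum_(i < d.+1) U i)%VS = fullv.

Definition Wn l := if (l <= d)%N then U l else 0%VS.
Definition pio (i : 'I_d.+1) : 'End(V) := sumv_pi_for (esym Hfull) i.
Definition pin l : 'End(V) := if (l < d.+1)%N then pio (inord l) else 0.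

Lemma pio_mem i v : pio i v \in U i.
Proof. exact: memv_sum_pi. Qed.

Lemma pio_sum v : \sum_(i < d.+1) pio i v = v.
Proof. by apply: sumv_pi_sum; rewrite memvf. Qed.

Lemma pin_mem l v : pin l v \in Wn l.
Proof.
rewrite /pin /Wn; case: ltnP => [ld|ld]; last by rewrite lfunE mem0v.
by rewrite -ltnS ld; have := pio_mem (inord l) v; rewrite inordK.
Qed.

Lemma pin_ord (i : 'I_d.+1) : pin i = pio i.
Proof. by rewrite /pin ltn_ord inord_val. Qed.

Lemma pin_sum v : \sum_(i < d.+1) pin i v = v.
Proof. by rewrite -[RHS]pio_sum; apply: eq_bigr => i _; rewrite pin_ord. Qed.

Lemma pio_comp (j : 'I_d.+1) u : u \in U j -> forall i, pio i u = if i == j then u else 0.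
Proof.
move=> uj i.
pose us (k : 'I_d.+1) := if k == j then u else 0.
have H1 : forall k, true -> pio k u \in U k by move=> k _; apply: pio_mem.
have H2 : forall k, true -> us k \in U k.
  by move=> k _; rewrite /us; case: eqP => [->//|_]; apply: mem0v.
have E := (directv_sum_unique Hdir) (fun k => pio k u) us H1 H2.
have : \sum_(k < d.+1) pio k u == \sum_(k < d.+1) us k.
  rewrite pio_sum (bigD1 j) //= /us eqxx big1 ?addr0 // => k /negbTE ->; done.
rewrite E => /forall_inP/(_ i isT)/eqP ->; done.
Qed.

Lemma sum_single (F : nat -> V) l : (forall i, i != l -> F i = 0) ->
  \sum_(i < d.+1) F i = if (l < d.+1)%N then F l else 0.
Proof.
move=> HF; case: ltnP => ld.
  rewrite (bigD1 (Ordinal ld)) //= big1 ?addr0 // => i ne; apply: HF.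
  by apply: contra ne => /eqP E; apply/eqP/val_inj.
by apply: big1 => i _; apply: HF; apply/eqP => E; move: (ltn_ord i); rewrite E ltnNge ld.
Qed.

Lemma pin_comp j u l : u \in Wn j -> pin l u = if l == j then u else 0.
Proof.
rewrite /Wn; case: (leqP j d) => jd; last first.
  by rewrite memv0 => /eqP ->; rewrite linear0; case: eqP.
move=> uj; rewrite /pin; case: ltnP => ld.
  have uj' : u \in U (inord j : 'I_d.+1) by rewrite inordK.
  rewrite (pio_comp uj') -(inj_eq val_inj) /= !inordK //.
by rewrite lfunE /=; case: eqP => // E; move: ld; rewrite E; lia.
Qed.

Lemma pin_pin l j v : pin l (pin j v) = if l == j then pin j v else 0.
Proof. exact/pin_comp/pin_mem. Qed.

Lemma pin_zero l v : (d < l)%N -> pin l v = 0.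
Proof. by move=> ld; rewrite /pin ltnNge ld /= lfunE. Qed.

Lemma pin_single k v : (forall j, j != k -> pin j v = 0) -> v = pin k v.
Proof.
move=> H; rewrite -{1}(pin_sum v) (sum_single H).
by case: ltnP => // kd; rewrite pin_zero.
Qed.

Lemma pin_eig (Z : 'End(V)) (mu : nat -> K) :
  (forall j u, (j <= d)%N -> u \in U j -> Z u = mu j *: u) ->
  forall l v, pin l (Z v) = mu l *: pin l v.
Proof.
move=> HZ l v; rewrite -{1}(pin_sum v) !linear_sum /=.
rewrite (eq_bigr (fun i : 'I_d.+1 => (fun i => if l == i then mu i *: pin i v else 0) (nat_of_ord i))).
  rewrite (sum_single (F := fun i => if l == i then mu i *: pin i v else 0) (l := l)).
    by rewrite eqxx; case: ltnP => // ld; rewrite pin_zero // scaler0.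
  by move=> i /negbTE; rewrite eq_sym => ->.
move=> i _; rewrite (HZ i) ?linearZ /= ?pin_pin; last first.
- have := pin_mem i v; rewrite /Wn -ltnS ltn_ord //.
- by rewrite -ltnS ltn_ord.
by case: eqP => [_//|_]; rewrite scaler0.
Qed.


Section Tri.
Variables (Z P Q : 'End(V)) (al be : nat -> K) (c c' g g' : K).
Hypothesis HP : forall j u, u \in Wn j -> forall l, l != j.+1 -> pin l (P u - al j *: u) = 0.
Hypothesis HQ : forall j u, u \in Wn j -> forall l, l.+1 != j -> pin l (Q u - be j *: u) = 0.
Hypothesis RP : forall v, P (Z v) - c *: Z (P v) = g *: v.
Hypothesis RQ : forall v, Q (Z v) - c' *: Z (Q v) = g' *: v.
Hypothesis NP : forall i s, (2 <= s)%N -> (s <= i)%N -> al (i - s) != c * al i.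
Hypothesis NQ : forall i s, (2 <= s)%N -> be (i + s) != c' * be i.

Lemma pinP0 l v : (forall l', l = l'.+1 -> pin l' v = 0) -> pin l (P v) = al l *: pin l v.
Proof.
move=> H; rewrite -{1}(pin_sum v) linear_sum /= linear_sum /=.
rewrite (eq_bigr (fun i : 'I_d.+1 => (fun i => if l == i then al i *: pin i v else 0) (nat_of_ord i))).
  rewrite (sum_single (F := fun i => if l == i then al i *: pin i v else 0) (l := l)).
    by rewrite eqxx; case: ltnP => // ld; rewrite pin_zero // scaler0.
  by move=> i /negbTE; rewrite eq_sym => ->.
move=> i _; case: (eqVneq l i.+1) => [E|ne].
  by rewrite (H i E) linear0 linear0 E; case: eqP => // /eqP; rewrite -[X in X == _]addn1 -[X in _ == X]addn0 eqn_add2l.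
rewrite -[P (pin i v)](subrK (al i *: pin i v)) linearD /= (HP (pin_mem i v) ne) add0r linearZ /= pin_pin.
by case: eqP => [_//|_]; rewrite scaler0.
Qed.

Lemma pinQ0 l v : pin l.+1 v = 0 -> pin l (Q v) = be l *: pin l v.
Proof.
move=> H; rewrite -{1}(pin_sum v) linear_sum /= linear_sum /=.
rewrite (eq_bigr (fun i : 'I_d.+1 => (fun i => if l == i then be i *: pin i v else 0) (nat_of_ord i))).
  rewrite (sum_single (F := fun i => if l == i then be i *: pin i v else 0) (l := l)).
    by rewrite eqxx; case: ltnP => // ld; rewrite pin_zero // scaler0.
  by move=> i /negbTE; rewrite eq_sym => ->.
move=> i _; case: (eqVneq l.+1 i) => [E|ne].
  by rewrite -E H linear0 linear0; case: eqP => // E2; move: E; rewrite E2; lia.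
rewrite -[Q (pin i v)](subrK (be i *: pin i v)) linearD /= (HQ (pin_mem i v) ne) add0r linearZ /= pin_pin.
by case: eqP => [_//|_]; rewrite scaler0.
Qed.

Definition claimU s := forall i u, u \in Wn i -> pin (i + s) (Z u) = 0.
Definition claimL s := forall i u, u \in Wn i -> (s <= i)%N -> pin (i - s) (Z u) = 0.

Lemma claimU_step s : (2 <= s)%N -> claimU s.+1 -> claimU s.
Proof.
move=> s2 IH i u ui; set l := (i + s)%N.
have := congr1 (pin l) (RQ u); rewrite linearB !linearZ /= (pin_comp l ui).
have -> : (l == i) = false by apply/negbTE; rewrite /l; lia.
rewrite scaler0 (pinQ0 (v := Z u)); last by rewrite /l -addnS; apply: IH.
set r := Q u - be i *: u.
have -> : Q u = be i *: u + r by rewrite /r addrC subrK.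
rewrite linearD linearZ /= linearD linearZ /=.
have -> : pin l (Z r) = 0.
  case: i ui @l @r => [|i] ui l r.
    have -> : r = 0.
      rewrite -(pin_sum r); apply: big1 => j _; apply: (HQ ui); done.
    by rewrite linear0 linear0.
  rewrite (@pin_single i r); last by move=> j ne; apply: (HQ ui).
  by have := IH i (pin i r) (pin_mem i r); rewrite /l addSnnS.
rewrite addr0 scalerN scalerA -scalerBl => /eqP; rewrite scaler_eq0 subr_eq0.
case/orP => [/eqP E|/eqP //]; move: (NQ i s2); rewrite -E /l eqxx //.
Qed.

Lemma claimU_all s : (2 <= s)%N -> claimU s.
Proof.
have main : forall n s, (d.+1 - n <= s)%N -> (2 <= s)%N -> claimU s.
  elim=> [|n IH] s0 hs h2.
    by move=> i u _; rewrite pin_zero //; rewrite subn0 in hs; lia.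
  case: (leqP (d.+1 - n) s0) => h; first exact: IH.
  apply: claimU_step => //; apply: IH; lia.
by move=> h2; apply: (main d.+1); rewrite ?subnn.
Qed.

Lemma claimL_step s : (2 <= s)%N -> claimL s.+1 -> claimL s.
Proof.
move=> s2 IH i u ui si; set l := (i - s)%N.
have := congr1 (pin l) (RP u); rewrite linearB !linearZ /= (pin_comp l ui).
have -> : (l == i) = false by apply/negbTE; rewrite /l; lia.
rewrite scaler0 (pinP0 (v := Z u)); last first.
  move=> l' E; have -> : l' = (i - s.+1)%N by move: E; rewrite /l; lia.
  by apply: IH => //; move: E; rewrite /l; lia.
set r := P u - al i *: u.
have -> : P u = al i *: u + r by rewrite /r addrC subrK.
rewrite linearD linearZ /= linearD linearZ /=.
have -> : pin l (Z r) = 0.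
  rewrite (@pin_single i.+1 r); last by move=> j ne; apply: (HP ui).
  have := IH i.+1 (pin i.+1 r) (pin_mem i.+1 r); rewrite subSS; apply; lia.
rewrite addr0 scalerN scalerA -scalerBl => /eqP; rewrite scaler_eq0 subr_eq0.
case/orP => [/eqP E|/eqP //]; move: (NP s2 si); rewrite -E /l eqxx //.
Qed.

Lemma claimL_all s : (2 <= s)%N -> claimL s.
Proof.
have main : forall n s, (d.+1 - n <= s)%N -> (2 <= s)%N -> claimL s.
  elim=> [|n IH] s0 hs h2.
    move=> i u ui si; rewrite subn0 in hs.
    have : u = 0 by move: ui; rewrite /Wn; case: ifP => [h|_]; [lia | rewrite memv0 => /eqP].
    by move=> ->; rewrite linear0 linear0.
  case: (leqP (d.+1 - n) s0) => h; first exact: IH.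
  apply: claimL_step => //; apply: IH; lia.
by move=> h2; apply: (main d.+1); rewrite ?subnn.
Qed.

Lemma tri_gen i u : u \in Wn i -> Z u \in (Wn i.-1 + Wn i + Wn i.+1)%VS.
Proof.
move=> ui; rewrite -(pin_sum (Z u)); apply: rpred_sum => l _.
have [h|h] := leqP (i + 2) l.
  have E : nat_of_ord l = (i + (l - i))%N by lia.
  rewrite E (claimU_all _ ui) ?mem0v //; lia.
have [h'|h'] := leqP (l + 2) i.
  have E : nat_of_ord l = (i - (i - l))%N by lia.
  rewrite E (claimL_all _ ui) ?mem0v //; lia.
have : nat_of_ord l = i.-1 \/ nat_of_ord l = i \/ nat_of_ord l = i.+1.
  by case: (i) h h' => [|i'] /= h h'; lia.
case=> [E|[E|E]]; have := pin_mem l (Z u); rewrite E => m.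
- exact: (subvP (subv_trans (addvSl _ _) (addvSl _ _)) _ m).
- exact: (subvP (subv_trans (addvSr _ _) (addvSl _ _)) _ m).
- exact: (subvP (addvSr _ _) _ m).
Qed.
End Tri.

Lemma memv_eig (f : 'End(V)) t v : (v \in leigenspace f t) = (f v == t *: v).
Proof. by rewrite /leigenspace memv_ker !lfun_simp /= subr_eq0. Qed.

Section Diag.
Variables (Z : 'End(V)) (mu : nat -> K).
Hypothesis HZ : forall j (u : V), (j <= d)%N -> u \in U j -> Z u = mu j *: u.
Hypothesis Hmu : forall i j, (i <= d)%N -> (j <= d)%N -> mu i = mu j -> i = j.

Lemma eig_pin t v : Z v = t *: v -> forall l, (mu l - t) *: pin l v = 0.
Proof.
move=> E l; rewrite scalerBl -(pin_eig HZ) E linearZ /= subrr //.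
Qed.

Lemma eigsp_eq i : (i <= d)%N -> leigenspace Z (mu i) = U i.
Proof.
move=> id; apply/vspaceP => v; apply/idP/idP; last first.
  by move=> vi; rewrite memv_eig (HZ id vi).
rewrite memv_eig => /eqP /eig_pin E.
have -> : v = pin i v.
  apply: pin_single => j ne; case: (leqP j d) => jd; last by rewrite pin_zero.
  have := E j; move/eqP; rewrite scaler_eq0 subr_eq0 => /orP[/eqP|/eqP//].
  by move/(Hmu jd id) => E2; move: ne; rewrite E2 eqxx.
by have := pin_mem i v; rewrite /Wn id.
Qed.

Lemma eigsp_none t : (forall i, (i <= d)%N -> t != mu i) -> leigenspace Z t = 0%VS.
Proof.
move=> Ht; apply/eqP; rewrite -subv0; apply/subvP => v; rewrite memv_eig => /eqP /eig_pin E.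
rewrite memv0 -(pin_sum v); apply/eqP/big1 => j _.
have := E j; move/eqP; rewrite scaler_eq0 subr_eq0 => /orP[/eqP E2|/eqP//].
by move: (Ht j); rewrite -ltnS ltn_ord E2 eqxx => /(_ isT).
Qed.

Lemma inv_split (W : {vspace V}) : (Z @: W <= W)%VS -> (W <= \sum_(i < d.+1) (W :&: U i))%VS.
Proof.
move=> ZW.
have ZWm : forall w, w \in W -> Z w \in W by move=> w wW; apply: (subvP ZW); apply: memv_img.
have main : forall k w, w \in W -> (forall l, (k <= l)%N -> pin l w = 0) -> forall l, pin l w \in W.
  elim=> [|k IH] w wW Hz l.
    by rewrite Hz ?mem0v.
  case: (leqP k d) => kd; last first.
    apply: IH => // l' kl'; case: (eqVneq l' k) => [->|ne]; first by rewrite pin_zero.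
    by apply: Hz; lia.
  set w' := Z w - mu k *: w.
  have w'W : w' \in W by rewrite rpredB ?rpredZ ?ZWm.
  have Hz' : forall l, (k <= l)%N -> pin l w' = 0.
    move=> l' kl'; rewrite linearB linearZ /= (pin_eig HZ) -scalerBl.
    case: (eqVneq l' k) => [->|ne]; first by rewrite subrr scale0r.
    by rewrite Hz ?scaler0 //; lia.
  have IH' := IH w' w'W Hz'.
  have Hl : forall l, l != k -> pin l w \in W.
    move=> l' ne; case: (leqP l' d) => l'd; last by rewrite pin_zero ?mem0v.
    have nz : mu l' - mu k != 0.
      by rewrite subr_eq0; apply/eqP => /(Hmu l'd kd) E; move: ne; rewrite E eqxx.
    have : pin l' w' = (mu l' - mu k) *: pin l' w.
      by rewrite /w' linearB linearZ /= (pin_eig HZ) scalerBl.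
    move=> E; have := rpredZ ((mu l' - mu k)^-1) (IH' l'); rewrite E scalerA mulVf // scale1r //.
  case: (eqVneq l k) => [->|ne]; last exact: Hl.
  have : w = pin k w + \sum_(i < d.+1 | i != Ordinal (kd : (k < d.+1)%N)) pin i w.
    by rewrite -[X in X = _](pin_sum w) (bigD1 (Ordinal (kd : (k < d.+1)%N))).
  move=> E; have -> : pin k w = w - \sum_(i < d.+1 | i != Ordinal (kd : (k < d.+1)%N)) pin i w.
    by rewrite {2}E addrK.
  rewrite rpredB // rpred_sum // => i ne; apply: Hl; apply: contra ne => /eqP E2; apply/eqP/val_inj.
  done.
apply/subvP => w wW; rewrite -(pin_sum w); apply: memv_sumr => i _.
rewrite memv_cap (main d.+1 w wW) //; last by move=> l dl; rewrite pin_zero.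
by have := pin_mem i w; rewrite /Wn -ltnS ltn_ord.
Qed.
End Diag.

Section Rel.
Variables (Z P : 'End(V)) (mu al : nat -> K) (c kap : K).
Hypothesis Hc : c != 0.
Hypothesis HZ : forall j (u : V), (j <= d)%N -> u \in U j -> Z u = mu j *: u.
Hypothesis HPs : forall j (u : V), (j <= d)%N -> u \in U j ->
  Z (P u - al j *: u) = (c^-1 * mu j) *: (P u - al j *: u).
Hypothesis Hk : forall j, (j <= d)%N -> al j * mu j = kap.

Lemma rel_one i u : (i <= d)%N -> u \in U i -> P (Z u) - c *: Z (P u) = ((1 - c) * kap) *: u.
Proof.
move=> id ui.
have E := HPs id ui.
have EP : P u = al i *: u + (P u - al i *: u) by rewrite addrC subrK.
rewrite (HZ id ui) linearZ /= {2}EP linearD /= [Z (al i *: u)]linearZ /= (HZ id ui) E.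
rewrite {1}EP -(Hk id).
set r := P u - al i *: u.
rewrite !scalerDr !scalerA mulrA mulfV // mul1r.
rewrite opprD addrACA subrr addr0 -scalerBl; congr (_ *: _); ring.
Qed.

Lemma rel_gen v : P (Z v) - c *: Z (P v) = ((1 - c) * kap) *: v.
Proof.
rewrite -(pin_sum v) !(linear_sum, scaler_sumr) /= -big_split; apply: eq_bigr => i _ /=.
have id : (i <= d)%N by rewrite -ltnS ltn_ord.
have ui : pin i v \in U i by have := pin_mem i v; rewrite /Wn id.
exact: rel_one id ui.
Qed.
End Rel.

End Proj.


Section Eig.
Variables (K : fieldType) (V : vectType K).
Variables (f g : 'End(V)) (d : nat) (th : nat -> K).
Hypothesis Hso : standard_ordering f g d th.

Definition SE (P : pred nat) := (\sum_(j < d.+1 | P j) leigenspace f (th j))%VS.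

Lemma th_inj i j : (i <= d)%N -> (j <= d)%N -> th i = th j -> i = j.
Proof.
case: Hso => /uniqP Hu _ _ _ id jd E.
have := Hu 0 i j; rewrite size_map size_iota !inE !(nth_map 0) ?size_iota ?ltnS //.
by rewrite !nth_iota ?ltnS // !add0n => /(_ id jd E).
Qed.

Lemma memv_eig' t v : (v \in leigenspace f t) = (f v == t *: v).
Proof. by rewrite /leigenspace memv_ker !lfun_simp /= subr_eq0. Qed.

Lemma SE_sub (P : pred nat) k : (k <= d)%N -> P k -> (leigenspace f (th k) <= SE P)%VS.
Proof.
move=> kd Pk; rewrite /SE.
by apply: (sumv_sup (Ordinal (kd : (k < d.+1)%N))).
Qed.

Lemma SE_mono (P P' : pred nat) : (forall j, (j <= d)%N -> P j -> P' j) -> (SE P <= SE P')%VS.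
Proof.
move=> H; apply/subv_sumP => j Pj; have jd : (j <= d)%N by rewrite -ltnS ltn_ord.
exact: SE_sub jd (H j jd Pj).
Qed.

Lemma sub_eig (P : pred nat) k v : v \in SE P -> f v - th k *: v \in SE (fun j => P j && (j != k)).
Proof.
move=> /memv_sumP[vs Hvs ->]; rewrite linear_sum /= scaler_sumr -sumrB.
apply: rpred_sum => j Pj.
have := Hvs j Pj; rewrite memv_eig' => /eqP ->; rewrite -scalerBl.
case: (eqVneq (nat_of_ord j) k) => [->|ne]; first by rewrite subrr scale0r mem0v.
apply: rpredZ; apply: (subvP (SE_sub _ _)) (Hvs j Pj).
  by rewrite -ltnS ltn_ord.
by rewrite Pj ne.
Qed.

Lemma tri_eig (P P' : pred nat) v :
  (forall j j', (j <= d)%N -> (j' <= d)%N -> P j ->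
     (j' == j.-1) || (j' == j) || (j' == j.+1) -> P' j') ->
  v \in SE P -> g v \in SE P'.
Proof.
move=> H /memv_sumP[vs Hvs ->]; rewrite linear_sum /=.
apply: rpred_sum => j Pj.
have jd : (j <= d)%N by rewrite -ltnS ltn_ord.
case: Hso => _ _ _ /(_ j jd) Htri.
have : g (vs j) \in (eigsp f d th j.-1 + eigsp f d th j + eigsp f d th j.+1)%VS.
  apply: (subvP Htri); apply: memv_img; rewrite /eigsp jd; exact: Hvs.
have sub : forall j', (j' == j.-1) || (j' == j) || (j' == j.+1) -> (eigsp f d th j' <= SE P')%VS.
  move=> j' hj; rewrite /eigsp; case: ifP => j'd; last by rewrite sub0v.
  by apply: SE_sub => //; apply: (H j j') => //.
move/(subvP _); apply.
by rewrite !subv_add !sub ?eqxx ?orbT.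
Qed.

Hypothesis Hdiag : (fullv <= SE predT)%VS.

Lemma SE_direct (P : pred nat) : (SE P :&: SE (fun j => ~~ P j))%VS = 0%VS.
Proof.
have := @direct_split K V 'I_d.+1 (fun j => leigenspace f (th j)) (fun j => P j).
apply; apply: eig_direct => i j E; apply/val_inj; apply: th_inj => //; by rewrite -ltnS ltn_ord.
Qed.

Lemma capE k : (k <= d)%N ->
  (SE (fun j => j <= k)%N :&: SE (fun j => k <= j)%N <= leigenspace f (th k))%VS.
Proof.
move=> kd; apply/subvP => v /memv_capP[v1 v2].
have : SE (fun j => j <= k)%N = (leigenspace f (th k) + SE (fun j => j < k)%N)%VS.
  rewrite /SE (bigD1 (Ordinal (kd : (k < d.+1)%N))) //=; congr (_ + _)%VS.
  by apply: eq_bigl => j; rewrite -(inj_eq val_inj) /= ltn_neqAle andbC.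
move=> E; move: v1; rewrite E => /memv_addP[e he [x hx Ev]].
have : x \in (SE (fun j => j < k)%N :&: SE (fun j => ~~ (j < k)%N))%VS.
  rewrite memv_cap hx /=.
  have -> : x = v - e by rewrite Ev addrC addKr.
  have hk : ~~ (k < k)%N by rewrite ltnn.
  rewrite rpredB //; last exact: (subvP (SE_sub (P := fun j => ~~ (j < k)%N) kd hk) e he).
  by apply: (subvP (SE_mono _) v v2) => j _; rewrite -leqNgt.
rewrite SE_direct memv0 => /eqP x0; by rewrite Ev x0 addr0.
Qed.

Lemma inv_eig (W : {vspace V}) :
  (forall k, (1 <= k <= d)%N ->
     (W <= (W :&: SE (fun j => j < k)%N) + (W :&: SE (fun j => k <= j)%N))%VS) ->
  (f @: W <= W)%VS.
Proof.
move=> H.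
have main : forall k, (k <= d)%N -> forall w, w \in W -> w \in SE (fun j => j <= k)%N -> f w \in W.
  elim=> [|k IH] kd w wW ws.
    have : w \in leigenspace f (th 0).
      apply: (subvP (capE (leq0n d))); rewrite memv_cap ws /=.
      by apply: (subvP (SE_mono _)) ws.
    by rewrite memv_eig' => /eqP ->; rewrite rpredZ.
  have := subvP (H k.+1 _) w wW; rewrite kd /= => /(_ isT) /memv_addP[x hx [y hy Ew]].
  move: hx hy; rewrite !memv_cap => /andP[xW xs] /andP[yW ys].
  have ye : y \in leigenspace f (th k.+1).
    apply: (subvP (capE kd)); rewrite memv_cap ys andbT.
    have -> : y = w - x by rewrite Ew addrC addKr.
    rewrite rpredB //; apply: (subvP (SE_mono _)) xs => j _ /ltnW; done.
  rewrite Ew linearD /= rpredD //.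
    by apply: IH; [apply: ltnW | | ].
  by move: ye; rewrite memv_eig' => /eqP ->; rewrite rpredZ.
apply/subvP => _ /memv_imgP[w wW ->].
apply: (main d) => //.
by apply: (subvP (SE_mono _)) (subvP Hdiag w (memvf w)) => j jd _.
Qed.

End Eig.


Lemma nat_trick (p q p' q' n : nat) : n = (p + q)%N -> n = (p' + q')%N ->
  (p + p' <= n)%N -> (q + q' <= n)%N -> (n <= q + q')%N /\ (n <= p + p')%N.
Proof. lia. Qed.

Section Irr.
Variables (K : fieldType) (V : vectType K).

Lemma dim_trick (W P Q P' Q' : {vspace V}) :
  (P + Q)%VS = W -> (P :&: Q = 0)%VS -> (P' + Q')%VS = W -> (P' :&: Q' = 0)%VS ->
  (P :&: P' = 0)%VS -> (Q :&: Q' = 0)%VS -> (Q + Q')%VS = W /\ (P + P')%VS = W.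
Proof.
move=> PQ PQ0 PQ' PQ0' PP0 QQ0.
have d1 := dimv_disjoint_sum PQ0; rewrite PQ in d1.
have d2 := dimv_disjoint_sum PQ0'; rewrite PQ' in d2.
have sP : (P <= W)%VS by rewrite -PQ addvSl.
have sQ : (Q <= W)%VS by rewrite -PQ addvSr.
have sP' : (P' <= W)%VS by rewrite -PQ' addvSl.
have sQ' : (Q' <= W)%VS by rewrite -PQ' addvSr.
have e3 : (\dim P + \dim P' <= \dim W)%N.
  by rewrite -(dimv_disjoint_sum PP0); apply: dimvS; rewrite subv_add sP sP'.
have e4 : (\dim Q + \dim Q' <= \dim W)%N.
  by rewrite -(dimv_disjoint_sum QQ0); apply: dimvS; rewrite subv_add sQ sQ'.
have [f1 f2] := nat_trick d1 d2 e3 e4.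
split; apply/eqP; rewrite eqEdim subv_add ?sP ?sP' ?sQ ?sQ' /=.
  by rewrite (dimv_disjoint_sum QQ0).
by rewrite (dimv_disjoint_sum PP0).
Qed.

Variables (d : nat) (X : nat -> {vspace V}) (Hdir : directv (\sum_(i < d.+1) X i)).

Lemma split_half (W : {vspace V}) i :
  (W <= \sum_(l < d.+1) (W :&: X l))%VS ->
  ((\sum_(l < d.+1 | (l < i)%N) (W :&: X l)) + (\sum_(l < d.+1 | (i <= l)%N) (W :&: X l)) = W)%VS /\
  ((\sum_(l < d.+1 | (l < i)%N) (W :&: X l)) :&: (\sum_(l < d.+1 | (i <= l)%N) (W :&: X l)) = 0)%VS.
Proof.
move=> sW; split.
  apply/eqP; rewrite eqEsubv; apply/andP; split.
    by rewrite subv_add; apply/andP; split; apply/subv_sumP => l _; apply: capvSl.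
  apply: subv_trans sW _; rewrite (bigID (fun l : 'I_d.+1 => (l < i)%N)) /=.
  apply: addvS => //; rewrite (eq_bigl (fun l : 'I_d.+1 => (i <= l)%N)) // => l.
  by rewrite -leqNgt.
apply/eqP; rewrite -subv0.
have E := direct_split (fun l : 'I_d.+1 => (l < i)%N) Hdir.
rewrite -[X in (_ <= X)%VS]E.
apply: capvS; apply/subv_sumP => l hl.
  apply: subv_trans (capvSr _ _) _; exact: (sumv_sup l).
apply: subv_trans (capvSr _ _) _; apply: (sumv_sup l) => //; by rewrite -leqNgt.
Qed.
End Irr.


Section QP.
Variables (K : fieldType) (q : K).
Lemma qexp_revE i d : qexp_rev q i d = q ^ (d%:Z - (2 * i)%:Z). Proof. by []. Qed.
Lemma qexpE i d : qexp q i d = q ^ ((2 * i)%:Z - d%:Z). Proof. by []. Qed.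

Lemma qexp_dsub l d : (l <= d)%N -> qexp q (d - l) d = qexp_rev q l d.
Proof. by move=> ld; rewrite qexpE qexp_revE; congr (_ ^ _); lia. Qed.
Lemma qexp_rev_dsub l d : (l <= d)%N -> qexp_rev q (d - l) d = qexp q l d.
Proof. by move=> ld; rewrite qexpE qexp_revE; congr (_ ^ _); lia. Qed.

Hypothesis Hq0 : q != 0.
Hypothesis Hq : forall n : nat, (0 < n)%N -> q ^+ n != 1.

Lemma qD (m n : int) : q ^ m * q ^ n = q ^ (m + n).
Proof. by rewrite expfzDr. Qed.

Lemma q1 (z : int) : q ^ z = 1 -> z = 0.
Proof.
case: z => k.
  case: k => [//|k] /= E; have E' : q ^+ k.+1 = 1 := E.
  by move: (@Hq k.+1 isT); rewrite E' eqxx.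
rewrite NegzE -invr_expz => /(congr1 GRing.inv); rewrite invrK invr1 => E.
have E' : q ^+ k.+1 = 1 := E.
by move: (@Hq k.+1 isT); rewrite E' eqxx.
Qed.

Lemma qinj (m n : int) : q ^ m = q ^ n -> m = n.
Proof.
move=> E; have : q ^ (m - n) = 1.
  by rewrite -qD E qD subrr.
by move/q1 => h; apply/eqP; rewrite -subr_eq0 h.
Qed.

End QP.

Section Main.
Variables (K : fieldType) (V : vectType K) (q : K).
Hypothesis Hq0 : q != 0.
Hypothesis Hq : forall n : nat, (0 < n)%N -> q ^+ n != 1.
Variables (A As : 'End(V)) (d : nat) (a as_ b bs : K).
Hypotheses (Ha : a != 0) (Has : as_ != 0) (Hb : b != 0) (Hbs : bs != 0).
Hypothesis HA : standard_ordering A As d (fun i => a * qexp q i d).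
Hypothesis HAs : standard_ordering As A d (fun i => as_ * qexp_rev q i d).
Variable U : nat -> {vspace V}.
Hypothesis HU : forall i, (i <= d)%N ->
     U i = ((\sum_(j < d.+1 | (j <= i)%N) leigenspace As (as_ * qexp_rev q j d)) :&:
            (\sum_(j < d.+1 | (j <= d - i)%N) leigenspace A (a * qexp q j d)))%VS.
Variable U' : nat -> {vspace V}.
Hypothesis HU' : forall i, (i <= d)%N ->
     U' i = ((\sum_(j < d.+1 | (d - i <= j)%N) leigenspace As (as_ * qexp_rev q j d)) :&:
             (\sum_(j < d.+1 | (i <= j)%N) leigenspace A (a * qexp q j d)))%VS.

Let th := fun i => a * qexp q i d.
Let ths := fun i => as_ * qexp_rev q i d.
Let SA := SE A d th.
Let SS := SE As d ths.

Lemma SE0 (f : 'End(V)) (t : nat -> K) (P : pred nat) :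
  (forall j, (j <= d)%N -> ~~ P j) -> SE f d t P = 0%VS.
Proof.
move=> H; apply/eqP; rewrite -subv0; apply/subv_sumP => j Pj.
by move: (H j); rewrite -ltnS ltn_ord Pj => /(_ isT).
Qed.

Lemma SSmono (P P' : pred nat) u : (forall j, (j <= d)%N -> P j -> P' j) -> u \in SS P -> u \in SS P'.
Proof. by move=> H; apply: (subvP (SE_mono As ths H)). Qed.
Lemma SAmono (P P' : pred nat) u : (forall j, (j <= d)%N -> P j -> P' j) -> u \in SA P -> u \in SA P'.
Proof. by move=> H; apply: (subvP (SE_mono A th H)). Qed.

Lemma U_SS l u : (l <= d)%N -> u \in U l -> u \in SS (fun j => j <= l)%N.
Proof. by move=> ld; rewrite HU // memv_cap => /andP[h _]. Qed.
Lemma U_SA l u : (l <= d)%N -> u \in U l -> u \in SA (fun j => j <= d - l)%N.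
Proof. by move=> ld; rewrite HU // memv_cap => /andP[_ h]. Qed.
Lemma U'_SS l u : (l <= d)%N -> u \in U' l -> u \in SS (fun j => d - l <= j)%N.
Proof. by move=> ld; rewrite HU' // memv_cap => /andP[h _]. Qed.
Lemma U'_SA l u : (l <= d)%N -> u \in U' l -> u \in SA (fun j => l <= j)%N.
Proof. by move=> ld; rewrite HU' // memv_cap => /andP[_ h]. Qed.

Lemma inU l u : (l <= d)%N -> u \in SS (fun j => j <= l)%N -> u \in SA (fun j => j <= d - l)%N -> u \in U l.
Proof. by move=> ld h1 h2; rewrite HU // memv_cap; apply/andP; split. Qed.
Lemma inU' l u : (l <= d)%N -> u \in SS (fun j => d - l <= j)%N -> u \in SA (fun j => l <= j)%N -> u \in U' l.
Proof. by move=> ld h1 h2; rewrite HU' // memv_cap; apply/andP; split. Qed.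

Lemma sh1 l u : (l <= d)%N -> u \in U l -> A u - (a * qexp_rev q l d) *: u \in Wn d U l.+1.
Proof.
move=> ld ul.
have x1 : A u - (a * qexp_rev q l d) *: u \in SS (fun j => j <= l.+1)%N.
  apply: memvB.
    apply: (tri_eig HAs _ (U_SS ld ul)) => j j' _ _ /= jl h; lia.
  apply: memvZ; apply: (SSmono _ (U_SS ld ul)) => j _ /= h; lia.
have x2 := sub_eig (d - l) (U_SA ld ul).
rewrite -(qexp_dsub q ld) in x1 *.
rewrite /Wn; case: (ltnP l d) => hl.
  apply: inU => //.
  by apply: (SAmono _ x2) => j _ /= h; lia.
have ld' : l = d by lia.
move: x2; rewrite SE0 ?memv0 // => j jd /=; rewrite ld' subnn; lia.
Qed.

Lemma sh2 l u : (l <= d)%N -> u \in U l ->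
  As u - (as_ * qexp_rev q l d) *: u \in (if l is l'.+1 then Wn d U l' else 0%VS).
Proof.
move=> ld ul.
have x1 := sub_eig l (U_SS ld ul).
have x2 : As u - (as_ * qexp_rev q l d) *: u \in SA (fun j => j <= (d - l).+1)%N.
  apply: memvB.
    apply: (tri_eig HA _ (U_SA ld ul)) => j j' _ _ /= jl h; lia.
  apply: memvZ; apply: (SAmono _ (U_SA ld ul)) => j _ /= h; lia.
case: l ld ul x1 x2 => [|l] ld ul x1 x2.
  by move: x1; rewrite SE0 ?memv0 // => j jd /=; lia.
rewrite /Wn (ltnW ld); apply: inU; first exact: ltnW.
  by apply: (SSmono _ x1) => j _ /= h; lia.
by apply: (SAmono _ x2) => j _ /= h; lia.
Qed.

Lemma sh3 l u : (l <= d)%N -> u \in U' l -> A u - (a * qexp q l d) *: u \in Wn d U' l.+1.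
Proof.
move=> ld ul.
have x2 := sub_eig l (U'_SA ld ul).
have x1 : A u - (a * qexp q l d) *: u \in SS (fun j => d - l.+1 <= j)%N.
  apply: memvB.
    apply: (tri_eig HAs _ (U'_SS ld ul)) => j j' _ _ /= jl h; lia.
  apply: memvZ; apply: (SSmono _ (U'_SS ld ul)) => j _ /= h; lia.
rewrite /Wn; case: (ltnP l d) => hl.
  apply: inU' => //.
  by apply: (SAmono _ x2) => j _ /= h; lia.
move: x2; rewrite SE0 ?memv0 // => j jd /=; lia.
Qed.

Lemma sh4 l u : (l <= d)%N -> u \in U' l ->
  As u - (as_ * qexp q l d) *: u \in (if l is l'.+1 then Wn d U' l' else 0%VS).
Proof.
move=> ld ul.
have x1 := sub_eig (d - l) (U'_SS ld ul).
rewrite /ths (qexp_rev_dsub q ld) in x1.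
have x2 : As u - (as_ * qexp q l d) *: u \in SA (fun j => l.-1 <= j)%N.
  apply: memvB.
    apply: (tri_eig HA _ (U'_SA ld ul)) => j j' _ _ /= jl h; lia.
  apply: memvZ; apply: (SAmono _ (U'_SA ld ul)) => j _ /= h; lia.
case: l ld ul x1 x2 => [|l] ld ul x1 x2.
  by move: x1; rewrite SE0 ?memv0 // => j jd /=; lia.
rewrite /Wn (ltnW ld); apply: inU'; first exact: ltnW.
  by apply: (SSmono _ x1) => j _ /= h; lia.
by apply: (SAmono _ x2) => j _ /= h; lia.
Qed.

Hypothesis HUdec : (forall i, (i <= d)%N -> U i != 0%VS) /\
           directv (\sum_(i < d.+1) U i) /\ (\sum_(i < d.+1) U i)%VS = fullv.
Hypothesis HU'dec : (forall i, (i <= d)%N -> U' i != 0%VS) /\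
           directv (\sum_(i < d.+1) U' i) /\ (\sum_(i < d.+1) U' i)%VS = fullv.
Variables (B Bs : 'End(V)).
Hypothesis HB : forall i, (i <= d)%N -> forall v, v \in U i -> B v = (b * qexp q i d) *: v.
Hypothesis HBs : forall i, (i <= d)%N -> forall v, v \in U' i -> Bs v = (bs * qexp_rev q i d) *: v.

Let mu := fun i => b * qexp q i d.
Let mus := fun i => bs * qexp_rev q i d.
Let c2 := q ^ (2%:Z).
Let c2' := q ^ (- 2%:Z).

Lemma c2_neq0 : c2 != 0. Proof. exact: expfz_neq0. Qed.
Lemma c2'_neq0 : c2' != 0. Proof. exact: expfz_neq0. Qed.
Lemma c2V : c2^-1 = c2'. Proof. by rewrite /c2 /c2' invr_expz. Qed.
Lemma c2'V : c2'^-1 = c2. Proof. by rewrite /c2 /c2' invr_expz opprK. Qed.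

Lemma qcancel (x : K) (m n : int) : x != 0 -> x * q ^ m = x * q ^ n -> m = n.
Proof. by move=> x0 /(mulfI x0) /(qinj Hq0 Hq). Qed.

Lemma qmul (x : K) (k m : int) : q ^ k * (x * q ^ m) = x * q ^ (k + m).
Proof. by rewrite mulrCA (qD Hq0). Qed.

Lemma mu_inj i j : (i <= d)%N -> (j <= d)%N -> mu i = mu j -> i = j.
Proof. by move=> _ _ /(qcancel Hb) E; lia. Qed.
Lemma mus_inj i j : (i <= d)%N -> (j <= d)%N -> mus i = mus j -> i = j.
Proof. by move=> _ _ /(qcancel Hbs) E; lia. Qed.

Lemma qexp_mul i : qexp q i d * qexp_rev q i d = 1.
Proof. by rewrite (qD Hq0) -[1](expr0z q); congr (_ ^ _); lia. Qed.


Section Gen2.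
Variables (W : nat -> {vspace V}) (Z P : 'End(V)) (al mu' : nat -> K) (c : K).
Hypothesis HZ : forall j u, (j <= d)%N -> u \in W j -> Z u = mu' j *: u.

Lemma shift_up :
  (forall j u, (j <= d)%N -> u \in W j -> P u - al j *: u \in Wn d W j.+1) ->
  (forall j, (j < d)%N -> mu' j.+1 = c^-1 * mu' j) ->
  forall j u, (j <= d)%N -> u \in W j ->
    Z (P u - al j *: u) = (c^-1 * mu' j) *: (P u - al j *: u).
Proof.
move=> Hsh Hmu j u jd uj; have := Hsh j u jd uj; rewrite /Wn.
case: ltnP => h r.
  by rewrite (HZ h r) Hmu.
by move: r; rewrite memv0 => /eqP ->; rewrite linear0 scaler0.
Qed.

Lemma shift_down :
  (forall j u, (j <= d)%N -> u \in W j -> P u - al j *: u \in (if j is j'.+1 then Wn d W j' else 0%VS)) ->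
  (forall j, (j < d)%N -> mu' j = c^-1 * mu' j.+1) ->
  forall j u, (j <= d)%N -> u \in W j ->
    Z (P u - al j *: u) = (c^-1 * mu' j) *: (P u - al j *: u).
Proof.
move=> Hsh Hmu j u jd uj; have := Hsh j u jd uj.
case: j jd uj => [|j] jd uj.
  by rewrite memv0 => /eqP ->; rewrite linear0 scaler0.
rewrite /Wn (ltnW jd) => r.
by rewrite (HZ (ltnW jd) r) Hmu.
Qed.

Variable (Hdir : directv (\sum_(i < d.+1) W i)) (Hfull : (\sum_(i < d.+1) W i)%VS = fullv).

Lemma HP_of :
  (forall j u, (j <= d)%N -> u \in W j -> P u - al j *: u \in Wn d W j.+1) ->
  forall j u, u \in Wn d W j -> forall l, l != j.+1 -> pin Hfull l (P u - al j *: u) = 0.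
Proof.
move=> Hsh j u; rewrite {1}/Wn; case: leqP => jd.
  by move=> uj l ne; rewrite (pin_comp Hdir Hfull l (Hsh j u jd uj)) (negbTE ne).
by rewrite memv0 => /eqP -> l _; rewrite linear0 scaler0 subrr linear0.
Qed.

Lemma HQ_of :
  (forall j u, (j <= d)%N -> u \in W j -> P u - al j *: u \in (if j is j'.+1 then Wn d W j' else 0%VS)) ->
  forall j u, u \in Wn d W j -> forall l, l.+1 != j -> pin Hfull l (P u - al j *: u) = 0.
Proof.
move=> Hsh j u; rewrite {1}/Wn; case: leqP => jd; last first.
  by rewrite memv0 => /eqP -> l _; rewrite linear0 scaler0 subrr linear0.
move=> uj l ne; have := Hsh j u jd uj; case: j jd uj ne => [|j] jd uj ne.
  by rewrite memv0 => /eqP ->; rewrite linear0.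
move=> r; rewrite (pin_comp Hdir Hfull l r).
by case: eqP => // E; move: ne; rewrite E eqxx.
Qed.
End Gen2.

Let HUdir : directv (\sum_(i < d.+1) U i) := proj1 (proj2 HUdec).
Let HUfull : (\sum_(i < d.+1) U i)%VS = fullv := proj2 (proj2 HUdec).
Let HU'dir : directv (\sum_(i < d.+1) U' i) := proj1 (proj2 HU'dec).
Let HU'full : (\sum_(i < d.+1) U' i)%VS = fullv := proj2 (proj2 HU'dec).

Lemma R1 v : A (Bs v) - c2 *: Bs (A v) = ((1 - c2) * (a * bs)) *: v.
Proof.
apply: (rel_gen HU'full (mu := mus) (al := fun j => a * qexp q j d)).
- exact: c2_neq0.
- by move=> j u jd uj; apply: HBs.
- apply: (shift_up (W := U')) => [j u jd uj|j u jd uj|j jd]; first exact: HBs.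
    exact: sh3.
  by rewrite c2V /c2' /mus !qexp_revE qmul; congr (_ * _ ^ _); lia.
- by move=> j _; rewrite /mus mulrACA qexp_mul mulr1.
Qed.

Lemma R2 v : As (Bs v) - c2' *: Bs (As v) = ((1 - c2') * (as_ * bs)) *: v.
Proof.
apply: (rel_gen HU'full (mu := mus) (al := fun j => as_ * qexp q j d)).
- exact: c2'_neq0.
- by move=> j u jd uj; apply: HBs.
- apply: (shift_down (W := U')) => [j u jd uj|j u jd uj|j jd]; first exact: HBs.
    exact: sh4.
  by rewrite c2'V /c2 /mus !qexp_revE qmul; congr (_ * _ ^ _); lia.
- by move=> j _; rewrite /mus mulrACA qexp_mul mulr1.
Qed.

Lemma R3 v : A (B v) - c2' *: B (A v) = ((1 - c2') * (a * b)) *: v.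
Proof.
apply: (rel_gen HUfull (mu := mu) (al := fun j => a * qexp_rev q j d)).
- exact: c2'_neq0.
- by move=> j u jd uj; apply: HB.
- apply: (shift_up (W := U)) => [j u jd uj|j u jd uj|j jd]; first exact: HB.
    exact: sh1.
  by rewrite c2'V /c2 /mu !qexpE qmul; congr (_ * _ ^ _); lia.
- by move=> j _; rewrite /mu mulrACA [qexp_rev q j d * _]mulrC qexp_mul mulr1.
Qed.

Lemma R4 v : As (B v) - c2 *: B (As v) = ((1 - c2) * (as_ * b)) *: v.
Proof.
apply: (rel_gen HUfull (mu := mu) (al := fun j => as_ * qexp_rev q j d)).
- exact: c2_neq0.
- by move=> j u jd uj; apply: HB.
- apply: (shift_down (W := U)) => [j u jd uj|j u jd uj|j jd]; first exact: HB.
    exact: sh2.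
  by rewrite c2V /c2' /mu !qexpE qmul; congr (_ * _ ^ _); lia.
- by move=> j _; rewrite /mu mulrACA [qexp_rev q j d * _]mulrC qexp_mul mulr1.
Qed.

Lemma T1 i u : u \in Wn d U i -> Bs u \in (Wn d U i.-1 + Wn d U i + Wn d U i.+1)%VS.
Proof.
apply: (tri_gen HUdir (Hfull := HUfull) (P := A) (Q := As)
  (al := fun j => a * qexp_rev q j d) (be := fun j => as_ * qexp_rev q j d)
  (c := c2) (c' := c2')).
- exact: (HP_of HUdir HUfull sh1).
- exact: (HQ_of HUdir HUfull sh2).
- exact: R1.
- exact: R2.
- move=> i' s h1 h2; apply/eqP; rewrite !qexp_revE /c2 qmul => /(qcancel Ha); lia.
- move=> i' s h1; apply/eqP; rewrite !qexp_revE /c2' qmul => /(qcancel Has); lia.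
Qed.

Lemma T2 i u : u \in Wn d U' i -> B u \in (Wn d U' i.-1 + Wn d U' i + Wn d U' i.+1)%VS.
Proof.
apply: (tri_gen HU'dir (Hfull := HU'full) (P := A) (Q := As)
  (al := fun j => a * qexp q j d) (be := fun j => as_ * qexp q j d)
  (c := c2') (c' := c2)).
- exact: (HP_of HU'dir HU'full sh3).
- exact: (HQ_of HU'dir HU'full sh4).
- exact: R3.
- exact: R4.
- move=> i' s h1 h2; apply/eqP; rewrite !qexpE /c2' qmul => /(qcancel Ha); lia.
- move=> i' s h1; apply/eqP; rewrite !qexpE /c2 qmul => /(qcancel Has); lia.
Qed.

Lemma HBmu j u : (j <= d)%N -> u \in U j -> B u = mu j *: u.
Proof. by move=> jd uj; apply: HB. Qed.
Lemma HBsmu j u : (j <= d)%N -> u \in U' j -> Bs u = mus j *: u.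
Proof. by move=> jd uj; apply: HBs. Qed.

Lemma eigspB j : eigsp B d mu j = Wn d U j.
Proof.
rewrite /eigsp /Wn; case: ifP => // jd; exact: (eigsp_eq HUdir HUfull HBmu mu_inj jd).
Qed.
Lemma eigspBs j : eigsp Bs d mus j = Wn d U' j.
Proof.
rewrite /eigsp /Wn; case: ifP => // jd; exact: (eigsp_eq HU'dir HU'full HBsmu mus_inj jd).
Qed.

Lemma SO_gen (Z Z' : 'End(V)) (W : nat -> {vspace V}) (m : nat -> K)
  (Hne : forall i, (i <= d)%N -> W i != 0%VS)
  (Hdir : directv (\sum_(i < d.+1) W i)) (Hfull : (\sum_(i < d.+1) W i)%VS = fullv)
  (HZ : forall j u, (j <= d)%N -> u \in W j -> Z u = m j *: u)
  (Hm : forall i j, (i <= d)%N -> (j <= d)%N -> m i = m j -> i = j)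
  (HT : forall i u, u \in Wn d W i -> Z' u \in (Wn d W i.-1 + Wn d W i + Wn d W i.+1)%VS) :
  standard_ordering Z Z' d m.
Proof.
have E : forall j, eigsp Z d m j = Wn d W j.
  move=> j; rewrite /eigsp /Wn; case: ifP => // jd; exact: (eigsp_eq Hdir Hfull HZ Hm jd).
split.
- rewrite map_inj_in_uniq ?iota_uniq // => i j; rewrite !mem_iota !add0n => /andP[_ hi] /andP[_ hj].
  by apply: Hm; rewrite -ltnS.
- by move=> i id; rewrite /leigenvalue (eigsp_eq Hdir Hfull HZ Hm id) Hne.
- move=> t; case: (boolP [exists i : 'I_d.+1, t == m i]) => [/existsP[i /eqP ->]|/existsPn H] Ht.
    by exists i => //; rewrite -ltnS ltn_ord.
  move: Ht; rewrite /leigenvalue (eigsp_none Hdir Hfull HZ) ?eqxx // => i id.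
  by have := H (inord i); rewrite inordK.
- move=> i id; rewrite !E; apply/subvP => _ /memv_imgP[u ui ->]; exact: HT.
Qed.

Lemma SO_B : standard_ordering B Bs d mu.
Proof. exact: (SO_gen (proj1 HUdec) HUdir HUfull HBmu mu_inj T1). Qed.
Lemma SO_Bs : standard_ordering Bs B d mus.
Proof. exact: (SO_gen (proj1 HU'dec) HU'dir HU'full HBsmu mus_inj T2). Qed.

Lemma diag_gen (Z : 'End(V)) (W : nat -> {vspace V}) (m : nat -> K)
  (Hdir : directv (\sum_(i < d.+1) W i)) (Hfull : (\sum_(i < d.+1) W i)%VS = fullv)
  (HZ : forall j u, (j <= d)%N -> u \in W j -> Z u = m j *: u)
  (Hm : forall i j, (i <= d)%N -> (j <= d)%N -> m i = m j -> i = j) :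
  diagonalizable Z.
Proof.
exists [seq m i | i <- iota 0 d.+1].
rewrite big_map -[iota 0 d.+1]/(index_iota 0 d.+1) big_mkord -[RHS]Hfull.
apply: eq_bigr => i _; apply: (eigsp_eq Hdir Hfull HZ Hm); by rewrite -ltnS ltn_ord.
Qed.

Lemma sum_mono (F G : nat -> {vspace V}) (P : pred nat) :
  (forall i, (i <= d)%N -> P i -> (F i <= G i)%VS) ->
  (\sum_(i < d.+1 | P i) F i <= \sum_(i < d.+1 | P i) G i)%VS.
Proof.
move=> H; apply/subv_sumP => i Pi; apply: subv_trans (H i _ Pi) _.
  by rewrite -ltnS ltn_ord.
exact: (sumv_sup i).
Qed.

Lemma sdisj (f g : 'End(V)) (t : nat -> K) (Hso : standard_ordering f g d t) m (X Y : {vspace V}) :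
  (X <= SE f d t (fun j => j < m)%N)%VS -> (Y <= SE f d t (fun j => m <= j)%N)%VS -> (X :&: Y = 0)%VS.
Proof.
move=> hX hY; apply/eqP; rewrite -subv0.
rewrite -[X in (_ <= X)%VS](SE_direct Hso (fun j => j < m)%N); apply: capvS => //.
apply: subv_trans hY _; apply: SE_mono => j _ /=; by rewrite -leqNgt.
Qed.

Section IrrW.
Variable W : {vspace V}.
Let Pi i := (\sum_(l < d.+1 | (l < i)%N) (W :&: U l))%VS.
Let Qi i := (\sum_(l < d.+1 | (i <= l)%N) (W :&: U l))%VS.
Let P'i i := (\sum_(l < d.+1 | (l < i)%N) (W :&: U' l))%VS.
Let Q'i i := (\sum_(l < d.+1 | (i <= l)%N) (W :&: U' l))%VS.

Lemma incP i : (Pi i <= SS (fun j => j < i)%N)%VS.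
Proof.
apply/subv_sumP => l hl; apply: subv_trans (capvSr _ _) _; apply/subvP => u ul.
have ld : (l <= d)%N by rewrite -ltnS ltn_ord.
apply: (SSmono _ (U_SS ld ul)) => j _ /=; lia.
Qed.
Lemma incP' k : (P'i k <= SS (fun j => d.+1 - k <= j)%N)%VS.
Proof.
apply/subv_sumP => l hl; apply: subv_trans (capvSr _ _) _; apply/subvP => u ul.
have ld : (l <= d)%N by rewrite -ltnS ltn_ord.
apply: (SSmono _ (U'_SS ld ul)) => j _ /=; lia.
Qed.
Lemma incQ i : (Qi i <= SA (fun j => j < d.+1 - i)%N)%VS.
Proof.
apply/subv_sumP => l hl; apply: subv_trans (capvSr _ _) _; apply/subvP => u ul.
have ld : (l <= d)%N by rewrite -ltnS ltn_ord.
apply: (SAmono _ (U_SA ld ul)) => j _ /=; lia.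
Qed.
Lemma incQ' k : (Q'i k <= SA (fun j => k <= j)%N)%VS.
Proof.
apply/subv_sumP => l hl; apply: subv_trans (capvSr _ _) _; apply/subvP => u ul.
have ld : (l <= d)%N by rewrite -ltnS ltn_ord.
apply: (SAmono _ (U'_SA ld ul)) => j _ /=; lia.
Qed.
Lemma subW (X : nat -> {vspace V}) (P : pred nat) : (\sum_(l < d.+1 | P l) (W :&: X l) <= W)%VS.
Proof. by apply/subv_sumP => l _; apply: capvSl. Qed.

Lemma irr : (B @: W <= W)%VS -> (Bs @: W <= W)%VS -> (A @: W <= W)%VS /\ (As @: W <= W)%VS.
Proof.
move=> BW BsW.
have sW := inv_split HUdir HUfull HBmu mu_inj BW.
have sW' := inv_split HU'dir HU'full HBsmu mus_inj BsW.
have key : forall k, (k <= d.+1)%N -> (Qi (d.+1 - k) + Q'i k = W)%VS /\ (Pi (d.+1 - k) + P'i k = W)%VS.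
  move=> k hk.
  have [PQ PQ0] := split_half HUdir (d.+1 - k) sW.
  have [PQ' PQ0'] := split_half HU'dir k sW'.
  apply: (dim_trick PQ PQ0 PQ' PQ0').
    exact: (sdisj HAs (incP _) (incP' _)).
  apply: (sdisj HA _ (incQ' _)); have := incQ (d.+1 - k); rewrite subKn //.
split.
  apply: (inv_eig HA).
    rewrite -HUfull; apply/subv_sumP => l _; apply/subvP => u ul.
    have ld : (l <= d)%N by rewrite -ltnS ltn_ord.
    exact: (SAmono _ (U_SA ld ul)).
  move=> k /andP[k1 kd]; have [E _] := @key k (leqW kd); rewrite -{1}E.
  apply: addvS; rewrite subv_cap subW /=.
    by have := incQ (d.+1 - k); rewrite subKn // leqW.
  exact: incQ'.
apply: (inv_eig HAs).
  rewrite -HUfull; apply/subv_sumP => l _; apply/subvP => u ul.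
  have ld : (l <= d)%N by rewrite -ltnS ltn_ord.
  exact: (SSmono _ (U_SS ld ul)).
move=> k /andP[k1 kd]; have [_ E] := @key (d.+1 - k)%N (leq_subr _ _).
rewrite subKn ?leqW // in E; rewrite -{1}E.
apply: addvS; rewrite subv_cap; apply/andP; split.
- exact: (subW U (fun l => l < k)%N).
- exact: incP.
- exact: (subW U' (fun l => l < d.+1 - k)%N).
- by have := incP' (d.+1 - k); rewrite subKn // leqW.
Qed.
End IrrW.

End Main.

Unset Implicit Arguments.

Theorem theorem9p1 (K : closedFieldType) (V : vectType K) (q : K)
  (Hq0 : q != 0) (Hq : forall n : nat, (0 < n)%N -> q ^+ n != 1)
  (A As : 'End(V)) (HTD : tridiagonal_pair A As)
  (d : nat) (a as_ b bs : K)
  (Ha : a != 0) (Has : as_ != 0) (Hb : b != 0) (Hbs : bs != 0)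
  (HA : standard_ordering A As d (fun i => a * qexp q i d))
  (HAs : standard_ordering As A d (fun i => as_ * qexp_rev q i d))
  (U : nat -> {vspace V})
  (HU : forall i, (i <= d)%N ->
     U i = ((\sum_(j < d.+1 | (j <= i)%N) leigenspace As (as_ * qexp_rev q j d)) :&:
            (\sum_(j < d.+1 | (j <= d - i)%N) leigenspace A (a * qexp q j d)))%VS)
  (U' : nat -> {vspace V})
  (HU' : forall i, (i <= d)%N ->
     U' i = ((\sum_(j < d.+1 | (d - i <= j)%N) leigenspace As (as_ * qexp_rev q j d)) :&:
             (\sum_(j < d.+1 | (i <= j)%N) leigenspace A (a * qexp q j d)))%VS)
  (HUdec : (forall i, (i <= d)%N -> U i != 0%VS) /\
           directv (\sum_(i < d.+1) U i) /\ (\sum_(i < d.+1) U i)%VS = fullv)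
  (HU'dec : (forall i, (i <= d)%N -> U' i != 0%VS) /\
           directv (\sum_(i < d.+1) U' i) /\ (\sum_(i < d.+1) U' i)%VS = fullv)
  (B Bs : 'End(V))
  (HB : forall i, (i <= d)%N -> forall v, v \in U i -> B v = (b * qexp q i d) *: v)
  (HBs : forall i, (i <= d)%N -> forall v, v \in U' i -> Bs v = (bs * qexp_rev q i d) *: v) :
  tridiagonal_pair B Bs /\
  standard_ordering B Bs d (fun i => b * qexp q i d) /\
  standard_ordering Bs B d (fun i => bs * qexp_rev q i d).
Proof.
have SB := SO_B Hq0 Hq Ha Has Hb Hbs HA HAs HU HU' HUdec HU'dec HB HBs.
have SBs := SO_Bs Hq0 Hq Ha Has Hb Hbs HA HAs HU HU' HUdec HU'dec HB HBs.
have Irr := irr Hq0 Hq Ha Has Hb Hbs HA HAs HU HU' HUdec HU'dec HB HBs.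
case: HTD => H1 _ _ _ H5.
have [_ [dir full]] := HUdec.
have [_ [dir' full']] := HU'dec.
split; last by split.
split => //.
- split.
    apply: (diag_gen dir full (m := fun i => b * qexp q i d)).
      by move=> j u jd uj; apply: HB.
    by move=> i j _ _ /(mulfI Hb) /(qinj Hq0 Hq) E; lia.
  apply: (diag_gen dir' full' (m := fun i => bs * qexp_rev q i d)).
    by move=> j u jd uj; apply: HBs.
  by move=> i j _ _ /(mulfI Hbs) /(qinj Hq0 Hq) E; lia.
- by exists d, (fun i => b * qexp q i d).
- by exists d, (fun i => bs * qexp_rev q i d).
- move=> W BW BsW; have [AW AsW] := Irr W BW BsW; exact: H5.
Qed.
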